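(* Let $b\ge1$, $n\ge1$. Let $K_{n+1}$ be the capacity of the bucket containing label $n+1$ in the random tree of size $n+1$, and let $N_{n,m}$ ($1\le m\le b$) be the number of nodes of capacity $m$ in the random tree of size $n$, both generated by the same growth process. Then for $2\le m\le b$, $$\mathbb P\{K_{n+1}=m\}=\mathbb E(N_{n,m-1})\cdot\begin{cases}\frac{m-1}{n},&\text{bucket recursive trees},\\ \frac{(d-1)(m-1)+1}{(d-1)n+1},&\text{$(b,d)$-ary increasing trees},\\ \frac{(\alpha+1)(m-1)-1}{(\alpha+1)n-1},&\text{$(b,\alpha)$-PORTs},\end{cases}$$ and $$\mathbb P\{K_{n+1}=1\}=\begin{cases}\mathbb E(N_{n,b})\frac bn,&\text{bucket recursive trees},\\ \mathbb E(N_{n,b})\frac{(d-1)b+1}{(d-1)n+1}+\frac{1-\sum_{j=1}^b\mathbb E(N_{n,j})}{(d-1)n+1},&\text{$(b,d)$-ary increasing trees},\\ \mathbb E(N_{n,b})\frac{(\alpha+1)b-1}{(\alpha+1)n-1}+\frac{-1+\sum_{j=1}^b\mathbb E(N_{n,j})}{(\alpha+1)n-1},&\text{$(b,\alpha)$-PORTs}.\end{cases}$$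
   Context: Fix $b\ge1$. A bucket tree is a rooted unordered tree whose nodes (''buckets'') $v$ contain $c(v)\in\{1,\dots,b\}$ labels (capacity); $v$ is saturated if $c(v)=b$, and every node with a child is saturated; $d^+(v)$ is its number of children; the size is the total number of labels. Growth process: start with a root bucket containing label 1; given the tree of size $n\ge1$, choose a node $v$ with probability $p(v)$; if $v$ is unsaturated, add label $n+1$ to $v$, otherwise attach to $v$ a new child bucket containing only $n+1$. The families: bucket recursive trees $p(v)=c(v)/n$; $(b,d)$-ary increasing trees ($d\ge2$ integer) $p(v)=\frac{(d-1)c(v)+1-d^+(v)}{(d-1)n+1}$; $(b,\alpha)$-plane oriented recursive trees, $(b,\alpha)$-PORTs ($\alpha>0$) $p(v)=\frac{d^+(v)+(\alpha+1)c(v)-1}{(\alpha+1)n-1}$ (capacities and out-degrees in the current tree of size $n$). *)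

(* Defs.v *)
From mathcomp Require Import all_boot all_order all_algebra.
Set Implicit Arguments. Unset Strict Implicit. Unset Printing Implicit Defensive.
Import Order.TTheory GRing.Theory Num.Theory.
Local Open Scope ring_scope.

(* A bucket tree is encoded as a sequence of nodes (buckets), node i being
   the pair (capacity c(i), index of parent of i).  Node 0 is the root (its
   parent field is irrelevant, set to 0); every other node i has a parent
   index < i.  Rooted unordered tree: the order of the list only records
   creation order. *)
Definition btree := seq (nat * nat).

Definition cap (t : btree) (v : nat) : nat := (nth (0, 0) t v).1.
Definition par (t : btree) (v : nat) : nat := (nth (0, 0) t v).2.
Definition outdeg (t : btree) (v : nat) : nat :=
  count (fun i => par t i == v) (iota 1 (size t).-1).
(* size = total number of labels *)
Definition tsize (t : btree) : nat := sumn (map fst t).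

Definition grow (b : nat) (t : btree) (v : nat) : btree :=
  if (cap t v < b)%N then set_nth (0, 0) t v ((cap t v).+1, par t v)
  else rcons t (1, v)%N.
Definition newnode (b : nat) (t : btree) (v : nat) : nat :=
  if (cap t v < b)%N then v else size t.

Inductive family (R : Type) :=
| BRT
| Dary of nat
| PORT of R.
Arguments BRT {R}.

Definition prob (R : realFieldType) (fam : family R) (t : btree) (v : nat) : R :=
  match fam with
  | BRT => (cap t v)%:R / (tsize t)%:R
  | Dary d => ((d%:R - 1) * (cap t v)%:R + 1 - (outdeg t v)%:R)
              / ((d%:R - 1) * (tsize t)%:R + 1)
  | PORT a => ((outdeg t v)%:R + (a + 1) * (cap t v)%:R - 1)
              / ((a + 1) * (tsize t)%:R - 1)
  end.

(* law k = the exact law of the random tree of size k.+1, as a finite list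
   of (probability, tree) pairs *)
Fixpoint law (R : realFieldType) (b : nat) (fam : family R) (k : nat)
  : seq (R * btree) :=
  match k with
  | 0 => [:: (1, [:: (1%N, 0%N)])]
  | k'.+1 =>
    flatten [seq [seq (pt.1 * prob fam pt.2 v, grow b pt.2 v)
                 | v <- iota 0 (size pt.2)]
            | pt <- law b fam k']
  end.

Definition EN (R : realFieldType) (b : nat) (fam : family R) (n m : nat) : R :=
  \sum_(pt <- law b fam n.-1) pt.1 * (count (fun x => x.1 == m) pt.2)%:R.

Definition PK (R : realFieldType) (b : nat) (fam : family R) (n m : nat) : R :=
  \sum_(pt <- law b fam n.-1) \sum_(v <- iota 0 (size pt.2))
     pt.1 * prob fam pt.2 v
     * (cap (grow b pt.2 v) (newnode b pt.2 v) == m)%:R.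

(* Main.v *)
Require Import Defs.
From mathcomp Require Import all_boot all_order all_algebra.
From mathcomp Require Import zify ring lra.
Import Order.TTheory GRing.Theory Num.Theory.
Set Implicit Arguments. Unset Strict Implicit. Unset Printing Implicit Defensive.
Local Open Scope ring_scope.

Definition inv (b k : nat) (t : btree) : Prop :=
  [/\ Defs.tsize t = k.+1, (0 < size t)%N,
      (forall i, (i < size t)%N -> (0 < cap t i <= b)%N) &
      (forall i, (0 < i < size t)%N -> (par t i < size t)%N /\ cap t (par t i) = b)].

Lemma tsizeE t : Defs.tsize t = (\sum_(v <- iota 0 (size t)) cap t v)%N.
Proof.
by rewrite /Defs.tsize sumnE big_map -{1}(mkseq_nth (0%N,0%N) t) /mkseq big_map.
Qed.

Lemma countE (P : pred (nat * nat)) t :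
  count P t = count (fun v => P (nth (0%N,0%N) t v)) (iota 0 (size t)).
Proof. by rewrite -{1}(mkseq_nth (0%N,0%N) t) /mkseq count_map. Qed.

Lemma sum_eqn (a : nat) r : (\sum_(v <- r) nat_of_bool (a == v))%N = count (fun v => a == v) r.
Proof. by elim: r => [|x r IH]; rewrite ?big_nil ?big_cons //= IH. Qed.

Lemma count_eq1 (a : nat) r : uniq r -> a \in r -> count (fun v => a == v) r = 1%N.
Proof.
move=> u ar; rewrite (@eq_count _ _ (pred1 a)) ?count_uniq_mem ?ar //.
Qed.

Lemma sum_outdeg_gen t N s : (forall i, i \in s -> (par t i < N)%N) ->
  (\sum_(v <- iota 0 N) count (fun i => par t i == v) s)%N = size s.
Proof.
elim: s => [|i s IH] H; first by rewrite big1.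
rewrite (eq_bigr (fun v => nat_of_bool (par t i == v) + count (fun j => par t j == v) s)%N) //.
rewrite big_split /= IH; last by move=> j js; apply: H; rewrite inE js orbT.
rewrite sum_eqn count_eq1 ?iota_uniq // mem_iota add0n; apply: H; exact: mem_head.
Qed.

Lemma sum_outdeg b k t : inv b k t ->
  (\sum_(v <- iota 0 (size t)) outdeg t v)%N = (size t).-1.
Proof.
case=> _ Hsz _ Hp; rewrite /outdeg sum_outdeg_gen ?size_iota // => i.
rewrite mem_iota => Hi; apply: (proj1 (Hp i _)); lia.
Qed.

Lemma outdeg0 b k t v : inv b k t -> (cap t v < b)%N -> outdeg t v = 0%N.
Proof.
case=> _ Hsz _ Hp Hc; rewrite /outdeg; apply/eqP; rewrite eqn0Ngt -has_count.
apply/hasPn => i; rewrite mem_iota => Hi; apply/negP => /eqP E.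
have [_ H2] := Hp i ltac:(lia); by move: Hc; rewrite -E H2 ltnn.
Qed.

Lemma sum_cnt_gen b t s : (forall v, v \in s -> (0 < cap t v <= b)%N) ->
  (\sum_(1 <= j < b.+1) count (fun v => cap t v == j) s)%N = size s.
Proof.
elim: s => [|i s IH] H; first by rewrite big1.
rewrite (eq_bigr (fun j => nat_of_bool (cap t i == j) + count (fun v => cap t v == j) s)%N) //.
rewrite big_split /= IH; last by move=> j js; apply: H; rewrite inE js orbT.
rewrite sum_eqn count_eq1 ?iota_uniq // mem_iota.
have := H i (mem_head _ _); lia.
Qed.

Lemma sum_cnt b k t : inv b k t ->
  (\sum_(1 <= j < b.+1) count (fun x => x.1 == j) t)%N = size t.
Proof.
case=> _ _ Hc _.
rewrite (eq_bigr (fun j => count (fun v => cap t v == j) (iota 0 (size t)))).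
  by rewrite sum_cnt_gen ?size_iota // => v; rewrite mem_iota => /andP[_ ?]; apply: Hc.
by move=> j _; rewrite countE.
Qed.

Lemma inv_grow b k t v : (0 < b)%N -> inv b k t -> (v < size t)%N -> inv b k.+1 (grow b t v).
Proof.
move=> b0 [Hs Hsz Hc Hp] Hv; rewrite /grow; case: ifP => Hlt.
- set t' := set_nth _ _ _ _.
  have Esz : size t' = size t by rewrite size_set_nth; apply/maxn_idPr.
  have Ecap i : cap t' i = if v == i then (cap t v).+1 else cap t i.
    by rewrite /cap nth_set_nth /= eq_sym; case: eqP => // ->.
  have Epar i : par t' i = par t i.
    by rewrite /par nth_set_nth /=; case: eqP => // ->.
  split.
  + rewrite !tsizeE Esz (eq_bigr (fun i => cap t i + nat_of_bool (v == i))%N); last first.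
      by move=> i _; rewrite Ecap; case: eqP => [->|]; rewrite ?addn1 ?addn0.
    by rewrite big_split /= sum_eqn count_eq1 ?iota_uniq ?mem_iota // -tsizeE Hs addn1.
  + by rewrite Esz.
  + move=> i; rewrite Esz Ecap => Hi; case: (v =P i) => [E|_]; last exact: Hc.
    subst i; have := Hc v Hv; lia.
  + move=> i; rewrite Esz Epar Ecap => Hi; have [H1 H2] := Hp i Hi; split => //.
    case: eqP => // E; by rewrite E H2 ltnn in Hlt.
- set t' := rcons _ _.
  have Esz : size t' = (size t).+1 by rewrite size_rcons.
  have Ecap i : cap t' i = if (i < size t)%N then cap t i else if i == size t then 1%N else 0%N.
    by rewrite /cap nth_rcons; case: ifP => //; case: ifP.
  have Epar i : (i < size t)%N -> par t' i = par t i.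
    by move=> Hi; rewrite /par nth_rcons Hi.
  have Hvb : cap t v = b by have := Hc v Hv; lia.
  split.
  + by rewrite /Defs.tsize /t' map_rcons sumn_rcons -/(Defs.tsize t) Hs addn1.
  + by rewrite Esz.
  + move=> i; rewrite Esz Ecap => Hi; case: ifP => [/Hc //|Hf].
    by case: eqP => //; lia.
  + move=> i; rewrite Esz => Hi; case: (ltnP i (size t)) => Hi'.
    * have [H1 H2] := Hp i ltac:(lia); rewrite Epar // Ecap H1; split => //; lia.
    * have -> : i = size t by lia.
      rewrite /par nth_rcons ltnn eqxx /= Ecap Hv; split => //; lia.
Qed.

Lemma law_inv (R : realFieldType) b (fam : Defs.family R) k pt : (0 < b)%N ->
  pt \in law b fam k -> inv b k pt.2.
Proof.
elim: k pt => [|k IH] pt b0 /=.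
- rewrite inE => /eqP -> /=; split => //.
  + by move=> [|i].
  + move=> i H; exfalso; move: H => /=; lia.
- move=> /flattenP [s /mapP [pt0 Hpt0 ->] /mapP [v Hv ->]] /=.
  apply: inv_grow => //; first exact: IH.
  by rewrite mem_iota in Hv.
Qed.

Definition famok (R : realFieldType) (fam : Defs.family R) : Prop :=
  match fam with BRT => True | Dary d => (2 <= d)%N | PORT a => 0 < a end.

Lemma natsum_count (R : realFieldType) (T : Type) s (P : pred T) :
  \sum_(x <- s) (P x)%:R = (count P s)%:R :> R.
Proof.
elim: s => [|x s IH]; rewrite ?big_nil ?big_cons //= IH natrD //.
Qed.

Lemma sum_const_count (R : realFieldType) (T : eqType) s (P : pred T) (F : T -> R) c :
  (forall v, v \in s -> F v = c * (P v)%:R) -> \sum_(v <- s) F v = c * (count P s)%:R.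
Proof. by move=> H; rewrite (eq_big_seq (fun v => c * (P v)%:R)) // -big_distrr natsum_count. Qed.

Lemma sum1_size (R : realFieldType) (T : Type) (s : seq T) : \sum_(v <- s) (1 : R) = (size s)%:R.
Proof. by elim: s => [|x s IH]; rewrite ?big_nil ?big_cons //= IH -natr1 addrC. Qed.

Lemma Es_pred (R : realFieldType) (n : nat) : (0 < n)%N -> (n.-1)%:R = n%:R - 1 :> R.
Proof. by move=> H; rewrite -{2}(prednK H) -natr1 addrK. Qed.

Lemma sum_prob (R : realFieldType) (fam : Defs.family R) b k t : famok fam -> inv b k t ->
  \sum_(v <- iota 0 (size t)) prob fam t v = 1.
Proof.
case: fam => [|d|a] /= Hf I; have [Hs Hsz Hc Hp] := I.
- by rewrite -mulr_suml -natr_sum -tsizeE Hs divff // pnatr_eq0.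
- rewrite -mulr_suml sumrB big_split /= -big_distrr -natr_sum -tsizeE Hs sum1_size.
  rewrite -natr_sum (sum_outdeg I) size_iota Es_pred //.
  have H1 : 0 <= d%:R - 1 :> R by rewrite subr_ge0 ler1n; lia.
  have H2 : 0 <= (k.+1)%:R :> R := ler0n _ _.
  have H3 := mulr_ge0 H1 H2.
  have HD : 0 < (d%:R - 1) * (k.+1)%:R + 1 :> R by lra.
  have -> : (d%:R - 1) * (k.+1)%:R + (size t)%:R - ((size t)%:R - 1) =
            (d%:R - 1) * (k.+1)%:R + 1 :> R by ring.
  by rewrite divff // lt0r_neq0.
- rewrite -mulr_suml sumrB big_split /= -big_distrr /= -!natr_sum -tsizeE Hs sum1_size.
  rewrite (sum_outdeg I) size_iota Es_pred //.
  have H2 : 1 <= (k.+1)%:R :> R by rewrite ler1n.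
  have HD : 0 < (a + 1) * (k.+1)%:R - 1 :> R by nra.
  have -> : (size t)%:R - 1 + (a + 1) * (k.+1)%:R - (size t)%:R =
            (a + 1) * (k.+1)%:R - 1 :> R by ring.
  by rewrite divff // lt0r_neq0.
Qed.

Lemma sum_w (R : realFieldType) b (fam : Defs.family R) k : (0 < b)%N -> famok fam ->
  \sum_(pt <- law b fam k) pt.1 = 1.
Proof.
move=> b0 Hf; elim: k => [|k IH]; first by rewrite /= big_seq1.
rewrite /= big_flatten /= big_map -[RHS]IH; apply: eq_big_seq => pt Hpt.
by rewrite big_map /= -big_distrr /= (sum_prob Hf (law_inv b0 Hpt)) mulr1.
Qed.

Definition S (R : realFieldType) b (fam : Defs.family R) t m :=
  \sum_(v <- iota 0 (size t)) prob fam t v * (cap (grow b t v) (newnode b t v) == m)%:R.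

Lemma PK_tree (R : realFieldType) b (fam : Defs.family R) k m :
  PK b fam k.+1 m = \sum_(pt <- law b fam k) pt.1 * S b fam pt.2 m.
Proof.
rewrite /PK /=; apply: eq_bigr => pt _; rewrite /S big_distrr; apply: eq_bigr => v _ /=.
by rewrite mulrA.
Qed.

Lemma keycap b k t v : inv b k t -> (v < size t)%N ->
  cap (grow b t v) (newnode b t v) = if (cap t v < b)%N then (cap t v).+1 else 1%N.
Proof.
move=> _ Hv; rewrite /grow /newnode; case: ifP => _.
  by rewrite /cap nth_set_nth /= eqxx.
by rewrite /cap nth_rcons ltnn eqxx.
Qed.

Lemma ind_m b k t v m : inv b k t -> (v < size t)%N -> (2 <= m <= b)%N ->
  (cap (grow b t v) (newnode b t v) == m) = (cap t v == m.-1).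
Proof.
move=> I Hv Hm; rewrite (keycap I Hv); case: I => _ _ Hc _; have := Hc v Hv.
case: ifP => H1 H2; apply/eqP/eqP => ?; lia.
Qed.

Lemma ind_1 b k t v : inv b k t -> (v < size t)%N ->
  (cap (grow b t v) (newnode b t v) == 1%N) = (cap t v == b).
Proof.
move=> I Hv; rewrite (keycap I Hv); case: I => _ _ Hc _; have := Hc v Hv.
case: ifP => H1 H2; apply/eqP/eqP => ?; lia.
Qed.

Lemma S_m (R : realFieldType) b k t m (fam : Defs.family R) c :
  inv b k t -> (2 <= m <= b)%N ->
  (forall v, cap t v = m.-1 -> outdeg t v = 0%N -> prob fam t v = c) ->
  S b fam t m = c * (count (fun x => x.1 == m.-1) t)%:R.
Proof.
move=> I Hm Hpr; rewrite /S (countE _ t); apply: sum_const_count => v.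
rewrite mem_iota => /andP[_ Hv]; rewrite (ind_m I Hv Hm) /= -/(cap t v).
case: (cap t v =P m.-1) => [E|_]; last by rewrite !mulr0.
rewrite (Hpr v E) //; apply: (outdeg0 I); rewrite E; lia.
Qed.

Lemma S_1 (R : realFieldType) b k t (fam : Defs.family R) c (o : R) :
  inv b k t -> (0 < b)%N ->
  (forall v, cap t v = b -> prob fam t v = c + (outdeg t v)%:R * o) ->
  (forall v, (cap t v < b)%N -> prob fam t v * 0 = (outdeg t v)%:R * o) ->
  S b fam t 1 = c * (count (fun x => x.1 == b) t)%:R + ((size t).-1)%:R * o.
Proof.
move=> I b0 H1 H2; have [Hs Hsz Hc Hp] := I.
rewrite /S (eq_big_seq (fun v => c * (cap t v == b)%:R + (outdeg t v)%:R * o)).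
  by rewrite big_split /= -big_distrr natsum_count -mulr_suml -natr_sum (sum_outdeg I) (countE _ t).
move=> v; rewrite mem_iota => /andP[_ Hv]; rewrite (ind_1 I Hv).
case: (cap t v =P b) => [E|E]; first by rewrite H1 // !mulr1 .
have Hlt : (cap t v < b)%N by have := Hc v Hv; have := E; lia.
by rewrite -(H2 v Hlt) !mulr0 add0r.
Qed.

Lemma main_m (R : realFieldType) b (fam : Defs.family R) k m c : (0 < b)%N -> (2 <= m <= b)%N ->
  (forall t, inv b k t -> forall v, cap t v = m.-1 -> outdeg t v = 0%N -> prob fam t v = c) ->
  PK b fam k.+1 m = EN b fam k.+1 m.-1 * c.
Proof.
move=> b0 Hm H; rewrite PK_tree /EN /= mulr_suml; apply: eq_big_seq => pt Hpt.
have I := law_inv b0 Hpt; rewrite (S_m I Hm (H _ I)); ring.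
Qed.

Lemma main_1 (R : realFieldType) b (fam : Defs.family R) k c o : (0 < b)%N -> famok fam ->
  (forall t, inv b k t -> forall v, cap t v = b -> prob fam t v = c + (outdeg t v)%:R * o) ->
  (forall t, inv b k t -> forall v, (cap t v < b)%N -> prob fam t v * 0 = (outdeg t v)%:R * o) ->
  PK b fam k.+1 1 = EN b fam k.+1 b * c + (\sum_(1 <= j < b.+1) EN b fam k.+1 j - 1) * o.
Proof.
move=> b0 Hf H1 H2.
have Ej : \sum_(1 <= j < b.+1) EN b fam k.+1 j = \sum_(pt <- law b fam k) pt.1 * (size pt.2)%:R.
  rewrite /EN /= exchange_big /=; apply: eq_big_seq => pt Hpt.
  by rewrite -big_distrr /= -natr_sum (sum_cnt (law_inv b0 Hpt)).
rewrite PK_tree Ej (eq_big_seq (fun pt => pt.1 * (count (fun x => x.1 == b) pt.2)%:R * c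
   + (pt.1 * (size pt.2)%:R - pt.1) * o)).
  by rewrite big_split /= -!mulr_suml sumrB (sum_w k b0 Hf) /EN.
move=> pt Hpt; have I := law_inv b0 Hpt; have [_ Hsz _ _] := I.
rewrite (S_1 I b0 (H1 _ I) (H2 _ I)) Es_pred //; ring.
Qed.

Theorem mainTheorem5 (R : realFieldType) (b n d : nat) (alpha : R) :
  (1 <= b)%N -> (1 <= n)%N -> (2 <= d)%N -> 0 < alpha ->
  (forall m : nat, (2 <= m <= b)%N ->
     [/\ PK b (@BRT R) n m = EN b (@BRT R) n m.-1 * (m.-1%:R / n%:R),
         PK b (Dary R d) n m = EN b (Dary R d) n m.-1 *
            (((d%:R - 1) * m.-1%:R + 1) / ((d%:R - 1) * n%:R + 1)) &
         PK b (PORT alpha) n m = EN b (PORT alpha) n m.-1 *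
            (((alpha + 1) * m.-1%:R - 1) / ((alpha + 1) * n%:R - 1))]) /\
  [/\ PK b (@BRT R) n 1 = EN b (@BRT R) n b * (b%:R / n%:R),
      PK b (Dary R d) n 1 =
        EN b (Dary R d) n b * (((d%:R - 1) * b%:R + 1) / ((d%:R - 1) * n%:R + 1))
        + (1 - \sum_(1 <= j < b.+1) EN b (Dary R d) n j) / ((d%:R - 1) * n%:R + 1) &
      PK b (PORT alpha) n 1 =
        EN b (PORT alpha) n b * (((alpha + 1) * b%:R - 1) / ((alpha + 1) * n%:R - 1))
        + (-1 + \sum_(1 <= j < b.+1) EN b (PORT alpha) n j) / ((alpha + 1) * n%:R - 1)].
Proof.
move=> b0 Hn d2 a0; case: n Hn => [//|k] _.
split.
  move=> m Hm; split.
  - apply: main_m => // t [Hs _ _ _] v E O; by rewrite /prob /= E Hs.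
  - apply: main_m => // t [Hs _ _ _] v E O; by rewrite /prob /= E O Hs subr0.
  - apply: main_m => // t [Hs _ _ _] v E O; by rewrite /prob /= E O Hs add0r.
split.
- rewrite (@main_1 R b BRT k (b%:R / k.+1%:R) 0) //.
  + ring.
  + move=> t [Hs _ _ _] v E; rewrite /prob /= E Hs; ring.
  + move=> t _ v _; ring.
- rewrite (@main_1 R b (Dary R d) k (((d%:R - 1) * b%:R + 1) / ((d%:R - 1) * k.+1%:R + 1))
     (- 1 / ((d%:R - 1) * k.+1%:R + 1))) //.
  + ring.
  + move=> t [Hs _ _ _] v E; rewrite /prob /= E Hs; ring.
  + move=> t I v H; rewrite (outdeg0 I H); ring.
- rewrite (@main_1 R b (PORT alpha) k (((alpha + 1) * b%:R - 1) / ((alpha + 1) * k.+1%:R - 1))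
     (1 / ((alpha + 1) * k.+1%:R - 1))) //.
  + ring.
  + move=> t [Hs _ _ _] v E; rewrite /prob /= E Hs; ring.
  + move=> t I v H; rewrite (outdeg0 I H); ring.
Qed.
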